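(* For every integer $s\ge3$, $F_{s,4}(x)=\frac{1}{(s-1)!}\bigl(x^2-(6s-1)x+6s^2\bigr)\prod_{p=4}^{s}(x-p)$ (an empty product equals $1$).
   Context: For an integer $j\ge0$, $\binom{x}{j}=x(x-1)\cdots(x-j+1)/j!$ as a polynomial in $x$, and $\binom{x}{j}=0$ for $j<0$. For integers $s\ge1$, $k\ge1$, the Moser polynomial is $F_{s,k}(x)=\sum_{p=1}^{s}(-1)^{p-1}p^{k-1}\binom{x}{s-p}$. *)

(* Defs.v *)
From HB Require Import structures.
From mathcomp Require Import all_boot all_order all_algebra.
Set Implicit Arguments. Unset Strict Implicit. Unset Printing Implicit Defensive.
Import Order.TTheory GRing.Theory Num.Theory.
Local Open Scope ring_scope.

Definition binomPoly (j : nat) : {poly rat} :=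
  (j`!%:R)^-1 *: \prod_(i < j) ('X - (i%:R)%:P).

Definition binomPolyZ (j : int) : {poly rat} :=
  match j with
  | Posz n => binomPoly n
  | Negz _ => 0
  end.

(* Moser polynomial F_{s,k}(x) = sum_{p=1}^{s} (-1)^(p-1) p^(k-1) binom(x, s-p) *)
Definition moserPoly (s k : nat) : {poly rat} :=
  \sum_(1 <= p < s.+1)
     ((-1) ^+ (p.-1) * (p%:R) ^+ (k.-1)) *: binomPolyZ (s%:Z - p%:Z).

(* Main.v *)
Require Import Defs.
From HB Require Import structures.
From mathcomp Require Import all_boot all_order all_algebra.
From mathcomp Require Import ring lra.
Import Order.TTheory GRing.Theory Num.Theory.
Local Open Scope ring_scope.

Lemma poly_eq_nat (p q : {poly rat}) :
  (forall n : nat, p.[n%:R] = q.[n%:R]) -> p = q.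
Proof.
move=> H; apply/eqP; rewrite -subr_eq0; apply/eqP.
apply: (@roots_geq_poly_eq0 _ _ [seq i%:R | i <- iota 0 (size (p - q))]).
- apply/allP => x /mapP [i _ ->]; by rewrite /root hornerD hornerN H subrr.
- rewrite map_inj_uniq ?iota_uniq //; by move=> a b /eqP; rewrite eqr_nat => /eqP.
- by rewrite size_map size_iota.
Qed.

Lemma prod_eval_bin (n j : nat) :
  \prod_(i < j) ((n%:R : rat) - i%:R) = ('C(n, j) * j`!)%:R.
Proof.
elim: j => [|j IH]; first by rewrite big_ord0 bin0.
rewrite big_ord_recr /= IH factS.
have E : ('C(n, j.+1) * (j.+1 * j`!))%N = ((n - j) * 'C(n, j) * j`!)%N.
  by rewrite mulnA (mulnC _ j.+1) mul_bin_left.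
rewrite E; case: (leqP j n) => hj.
  by rewrite !natrM natrB // mulrC mulrA.
by rewrite bin_small // !mul0n muln0 mul0r.
Qed.

Lemma binomPoly_eval (j n : nat) : (binomPoly j).[n%:R] = ('C(n, j))%:R.
Proof.
rewrite /binomPoly hornerZ horner_prod.
under eq_bigr => i _ do rewrite hornerXsubC.
rewrite prod_eval_bin natrM mulrC -mulrA mulfV ?mulr1 //.
by rewrite pnatr_eq0 -lt0n fact_gt0.
Qed.

Definition cS (p : nat) : rat := (-1) ^+ (p.-1) * (p%:R) ^+ 3.
Definition S (n s : nat) : rat := \sum_(1 <= p < s.+1) cS p * ('C(n, s - p))%:R.
Definition Q (s : nat) (x : rat) : rat := x ^+ 2 - (6 * s%:R - 1) * x + 6 * s%:R ^+ 2.
Definition T (n s : nat) : rat :=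
  ((s.-1)`!%:R)^-1 * (Q s n%:R * \prod_(4 <= p < s.+1) (n%:R - p%:R)).

Lemma S_pascal n m : S n.+1 m.+1 = S n m.+1 + S n m.
Proof.
rewrite /S big_nat_recr //= [X in _ = X + _]big_nat_recr //= subnn !bin0.
rewrite [RHS]addrAC -big_split /=; congr (_ + _).
apply: eq_big_nat => p /andP [_ hp].
by rewrite subSn // binS natrD mulrDr.
Qed.

Lemma S0 s : (0 < s)%N -> S 0 s = cS s.
Proof.
case: s => // s _; rewrite /S big_nat_recr //= subnn bin0 mulr1 big1_seq ?add0r //.
move=> p; rewrite mem_index_iota => hp.
rewrite /= in hp; move/andP: hp => [_ hp]. have -> : (s.+1 - p = (s - p).+1)%N by rewrite subSn. by rewrite bin0n mulr0.
Qed.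

Lemma C2 n : 2 * ('C(n, 2))%:R = (n%:R : rat) * (n%:R - 1).
Proof.
elim: n => [|n IH]; first by rewrite bin0n mulr0 mul0r.
rewrite binS bin1 natrD mulrDr IH -natr1; ring.
Qed.

Lemma S3 n : S n 3 = ('C(n, 2))%:R - 8 * n%:R + 27.
Proof.
rewrite /S big_nat_recr //= big_nat_recr //= big_nat1 /cS /= bin1 bin0.
ring.
Qed.

Lemma T3 n : T n 3 = 2^-1 * ((n%:R : rat) ^+ 2 - 17 * n%:R + 54).
Proof.
rewrite /T big_geq // mulr1 /Q /=; congr (_ * _); ring.
Qed.

Lemma S3T3 n : S n 3 = T n 3.
Proof.
rewrite S3 T3.
have H := C2 n.
have -> : ('C(n, 2))%:R = 2^-1 * ((n%:R : rat) * (n%:R - 1)) by rewrite -H mulrA mulVf ?mul1r.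
by field.
Qed.

Lemma P0 k : 6 * \prod_(4 <= p < k.+4) (0 - p%:R) = (-1) ^+ (k.+2) * (k.+3)`!%:R :> rat.
Proof.
elim: k => [|k IH].
  by rewrite big_geq // mulr1 /= expr2 mulrN1 opprK mul1r.
rewrite big_nat_recr //= mulrA IH [(k.+4)`!]factS natrM !exprS -!natr1.
ring.
Qed.

Lemma T0 s : (3 <= s)%N -> T 0 s = cS s.
Proof.
case: s => [|[|[|k]]] // _.
rewrite /T /Q /cS /=.
have := P0 k; set P := \prod_(_ <= _ < _) _ => HP.
have -> : P = 6^-1 * ((-1) ^+ (k.+2) * (k.+3)`!%:R) by rewrite -HP mulrA mulVf ?mul1r.
rewrite [(k.+3)`!]factS natrM.
have hf : ((k.+2)`!%:R : rat) != 0 by rewrite pnatr_eq0 -lt0n fact_gt0.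
field; exact: hf.
Qed.

Lemma T_pascal n k : T n.+1 k.+4 = T n k.+4 + T n k.+3.
Proof.
rewrite /T /=.
rewrite (big_nat_recl _ _ _ (_ : 4 <= k.+4)%N) //.
rewrite (big_nat_recr _ _ _ (_ : 4 <= k.+4)%N) //=.
rewrite (eq_bigr (fun p => (n%:R : rat) - p%:R)); last first.
  by move=> p _; rewrite -[(p.+1)%:R]natr1 -[(n.+1)%:R]natr1; ring.
set R := \prod_(_ <= _ < _) _.
rewrite [(k.+3)`!]factS natrM.
have hf : ((k.+2)`!%:R : rat) != 0 by rewrite pnatr_eq0 -lt0n fact_gt0.
have hk : ((k.+3)%:R : rat) != 0 by rewrite pnatr_eq0.
rewrite /Q -!natr1.
field.
by rewrite hf /=; rewrite -!natr1 in hk.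
Qed.

Lemma ST n s : (3 <= s)%N -> S n s = T n s.
Proof.
elim: n s => [|n IH] s hs; first by rewrite S0 ?T0 //; apply: leq_trans hs.
case: s hs => [|[|[|[|k]]]] // hs; first exact: S3T3.
by rewrite S_pascal T_pascal !IH.
Qed.

Lemma moser_eval s n : (moserPoly s 4).[n%:R] = S n s.
Proof.
rewrite /moserPoly horner_sum /S; apply: eq_big_nat => p /andP [_ hp].
by rewrite subzn // hornerZ /= binomPoly_eval.
Qed.

Theorem mainTheorem7 (s : nat) (hs : (3 <= s)%N) :
  moserPoly s 4 =
    ((s.-1)`!%:R)^-1 *:
      (('X ^+ 2 - (6 * s - 1)%:R *: 'X + (6 * s ^ 2)%:R%:P)
       * \prod_(4 <= p < s.+1) ('X - (p%:R)%:P)).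
Proof.
apply: poly_eq_nat => n.
rewrite moser_eval ST // /T /Q hornerZ hornerM horner_prod.
rewrite !hornerE.
rewrite [in RHS](eq_bigr (fun p => (n%:R : rat) - p%:R)); last by move=> p _; rewrite hornerXsubC.
rewrite natrB; last by rewrite muln_gt0; case: s hs.
rewrite !natrM; ring.
Qed.
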